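(* Consider the linear program $\min\{c^\top x + \sum_{i=1}^t (d^i)^\top y^i : T^i x + Q^i y^i = h^i\ (i \in [t]),\ x \in X,\ y^i \in Y^i\ (i\in[t])\}$ and let $\mathcal{F}' := \{(x,\theta^1,\dots,\theta^t) : x \in X,\ (h^i - T^i x, \theta^i) \in \mathrm{epi}(f^i)\ \forall i \in [t]\}$. Let $\rho \in \mathbb{R}^n$ and $\rho_0^1,\dots,\rho_0^t \ge 0$, and assume $\sigma_{\mathcal{F}'}(\rho,\rho_0^1,\ldots,\rho_0^t)$ is finite. If $(\hat\alpha^1,\dots,\hat\alpha^t)$ is an optimal solution of $$\max_{\alpha^1,\dots,\alpha^t}\Big\{-\sum_{i\in[t]}(\alpha^i)^\top h^i + \sigma_X\Big(\rho + \sum_{i\in[t]}(T^i)^\top\alpha^i\Big) + \sum_{i\in[t]}\sigma_{Y^i}\big((Q^i)^\top\alpha^i + \rho_0^i d^i\big)\Big\},$$ then every $(x,\theta^1,\dots,\theta^t)$ with $x \in X$ satisfying the cuts $(\hat\alpha^i)^\top(h^i - T^i x) + \rho_0^i\theta^i \ge \sigma_{\mathrm{epi}(f^i)}(\hat\alpha^i,\rho_0^i)$ for all $i\in[t]$ also satisfies $\rho^\top x + \sum_{i\in[t]}\rho_0^i\theta^i \ge \sigma_{\mathcal{F}'}(\rho,\rho_0^1,\ldots,\rho_0^t)$.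
   Context: $X \subseteq \mathbb{R}^n$ and $Y^i \subseteq \mathbb{R}^{m_i}$ ($i \in [t]$) are nonempty polyhedra, $T^i \in \mathbb{R}^{p_i \times n}$, $Q^i \in \mathbb{R}^{p_i\times m_i}$, $h^i \in \mathbb{R}^{p_i}$, $d^i \in \mathbb{R}^{m_i}$. For each $i$, $f^i(w) := \inf\{(d^i)^\top y^i : Q^i y^i = w,\ y^i \in Y^i\}$ and $\mathrm{epi}(f^i) := \{(w,\theta) : \theta \ge f^i(w)\}$. For $\mathcal{X} \subseteq \mathbb{R}^k$, $\sigma_{\mathcal{X}}(\alpha) := \inf_{x \in \mathcal{X}}\alpha^\top x$; for sets of tuples the argument is the concatenated coefficient vector. *)

(* Defs.v *)
From HB Require Import structures.
From mathcomp Require Import all_boot all_order all_algebra.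
From mathcomp Require Import all_classical all_reals.
From mathcomp Require Import ereal.
Set Implicit Arguments. Unset Strict Implicit. Unset Printing Implicit Defensive.
Import Order.TTheory GRing.Theory Num.Theory.
Local Open Scope ring_scope.
Local Open Scope classical_set_scope.

Section Defs.
Variable R : realType.

Definition vdot (k : nat) (a x : 'cV[R]_k) : R := \sum_(j < k) a j 0 * x j 0.

Definition polyhedron (k : nat) (P : set 'cV[R]_k) : Prop :=
  exists (r : nat) (A : 'M[R]_(r, k)) (b : 'cV[R]_r),
    P = [set x | forall j : 'I_r, (A *m x) j 0 <= b j 0].

Definition sigma (k : nat) (S : set 'cV[R]_k) (a : 'cV[R]_k) : \bar R :=
  ereal_inf [set (vdot a x)%:E | x in S].

Definition valf (p m : nat) (Q : 'M[R]_(p, m)) (d : 'cV[R]_m) (Y : set 'cV[R]_m)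
  (w : 'cV[R]_p) : \bar R :=
  ereal_inf [set (vdot d y)%:E | y in [set y | Q *m y = w /\ Y y]].

Definition epi (p : nat) (f : 'cV[R]_p -> \bar R) : set ('cV[R]_p * R) :=
  [set wt | f wt.1 <= (wt.2)%:E]%E.

Definition sigma_epi (p : nat) (f : 'cV[R]_p -> \bar R) (a : 'cV[R]_p) (r : R)
  : \bar R :=
  ereal_inf [set (vdot a wt.1 + r * wt.2)%:E | wt in epi f].

Definition Fprime (n t : nat) (p m : 'I_t -> nat) (X : set 'cV[R]_n)
  (T : forall i, 'M[R]_(p i, n)) (Q : forall i, 'M[R]_(p i, m i))
  (h : forall i, 'cV[R]_(p i)) (d : forall i, 'cV[R]_(m i))
  (Y : forall i, set 'cV[R]_(m i)) : set ('cV[R]_n * ('I_t -> R)) :=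
  [set xt | X xt.1 /\
     forall i : 'I_t, epi (valf (Q i) (d i) (Y i)) (h i - T i *m xt.1, xt.2 i)].

Definition sigma_F (n t : nat) (F : set ('cV[R]_n * ('I_t -> R)))
  (rho : 'cV[R]_n) (rho0 : 'I_t -> R) : \bar R :=
  ereal_inf [set (vdot rho xt.1 + \sum_(i < t) rho0 i * xt.2 i)%:E | xt in F].

Definition dual_obj (n t : nat) (p m : 'I_t -> nat) (X : set 'cV[R]_n)
  (T : forall i, 'M[R]_(p i, n)) (Q : forall i, 'M[R]_(p i, m i))
  (h : forall i, 'cV[R]_(p i)) (d : forall i, 'cV[R]_(m i))
  (Y : forall i, set 'cV[R]_(m i)) (rho : 'cV[R]_n) (rho0 : 'I_t -> R)
  (a : forall i, 'cV[R]_(p i)) : \bar R :=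
  ((- \sum_(i < t) vdot (a i) (h i))%:E
   + sigma X (rho + \sum_(i < t) (T i)^T *m a i)
   + \sum_(i < t) sigma (Y i) ((Q i)^T *m a i + rho0 i *: d i))%E.

End Defs.

(* Main.v *)
Require Import Defs.
From HB Require Import structures.
From mathcomp Require Import all_boot all_order all_algebra.
From mathcomp Require Import all_classical all_reals.
From mathcomp Require Import ereal.
From mathcomp Require Import ring lra.
From Stdlib Require List Classical_Prop.
Set Implicit Arguments. Unset Strict Implicit. Unset Printing Implicit Defensive.
Import Order.TTheory GRing.Theory Num.Theory.
Local Open Scope ring_scope.


Section FM.
Variable R : realFieldType.

Definition form := ((nat -> R) * R)%type.
Definition dot (N : nat) (g z : nat -> R) : R := \sum_(i < N) g i * z i.
Definition sat N (L : list form) z := forall gk, List.In gk L -> gk.2 <= dot N gk.1 z.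

Inductive deriv (N : nat) (P : form -> Prop) : (nat -> R) -> R -> Prop :=
| dmem gk : P gk -> deriv N P gk.1 gk.2
| dzero : deriv N P (fun _ => 0) 0
| dadd g1 k1 g2 k2 : deriv N P g1 k1 -> deriv N P g2 k2 ->
    deriv N P (fun i => g1 i + g2 i) (k1 + k2)
| dscale a g k : 0 <= a -> deriv N P g k -> deriv N P (fun i => a * g i) (a * k)
| dweak g k k' : deriv N P g k -> k' <= k -> deriv N P g k'
| dext g g' k : deriv N P g k -> (forall i, (i < N)%N -> g i = g' i) -> deriv N P g' k.

Lemma dot_ext N g g' z : (forall i, (i < N)%N -> g i = g' i) -> dot N g z = dot N g' z.
Proof. by move=> H; apply: eq_bigr => i _; rewrite H. Qed.

Lemma deriv_sound N P g k : deriv N P g k ->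
  forall z, (forall gk, P gk -> gk.2 <= dot N gk.1 z) -> k <= dot N g z.
Proof.
elim=> {g k}.
- by move=> gk Pg z H; apply: H.
- by move=> z _; rewrite /dot big1 // => i _; rewrite mul0r.
- move=> g1 k1 g2 k2 _ IH1 _ IH2 z H; rewrite /dot.
  rewrite (eq_bigr (fun i : 'I_N => g1 i * z i + g2 i * z i)); last by move=> i _; rewrite mulrDl.
  by rewrite big_split /=; apply: lerD; [apply: IH1|apply: IH2].
- move=> a g k a0 _ IH z H; rewrite /dot.
  rewrite (eq_bigr (fun i : 'I_N => a * (g i * z i))); last by move=> i _; rewrite mulrA.
  by rewrite -mulr_sumr; apply: ler_wpM2l => //; apply: IH.
- by move=> g k k' _ IH kk z H; apply: le_trans kk (IH z H).
- by move=> g g' k _ IH e z H; rewrite -(dot_ext z e); apply: IH.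
Qed.

Lemma dotS N g z : dot N.+1 g z = dot N g z + g N * z N.
Proof. by rewrite /dot big_ord_recr. Qed.

Lemma dot_lin N g a b (s : R) : dot N g (fun i => a i + s * b i) = dot N g a + s * dot N g b.
Proof.
rewrite /dot mulr_sumr -big_split; apply: eq_bigr => i _ /=; ring.
Qed.

Lemma dot_scale N g a (s : R) : dot N g (fun i => s * a i) = s * dot N g a.
Proof. rewrite /dot mulr_sumr; apply: eq_bigr => i _ /=; ring. Qed.

Lemma dot_glin N (g h a : nat -> R) (s : R) : dot N (fun i => g i + s * h i) a = dot N g a + s * dot N h a.
Proof.
rewrite /dot mulr_sumr -big_split; apply: eq_bigr => i _ /=; ring.
Qed.

Definition Pos N (L : list form) := List.filter (fun gk : form => 0 < gk.1 N) L.
Definition Neg N (L : list form) := List.filter (fun gk : form => gk.1 N < 0) L.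
Definition Zer N (L : list form) := List.filter (fun gk : form => gk.1 N == 0) L.
Definition comb N (p q : form) : form :=
  (fun i => (- q.1 N) * p.1 i + p.1 N * q.1 i, (- q.1 N) * p.2 + p.1 N * q.2).
Definition newL N (L : list form) :=
  Zer N L ++ List.flat_map (fun p => List.map (comb N p) (Neg N L)) (Pos N L).

Lemma newL_In N L gk : List.In gk (newL N L) ->
  (List.In gk L /\ gk.1 N = 0) \/
  exists p q, [/\ List.In p L, List.In q L, 0 < p.1 N, q.1 N < 0 & gk = comb N p q].
Proof.
rewrite /newL List.in_app_iff => -[].
  by rewrite /Zer List.filter_In => -[H /eqP E]; left.
move=> /List.in_flat_map [p [] /List.filter_In [Hp pP]] /List.in_map_iff [q [<- /List.filter_In [Hq qN]]].
by right; exists p, q.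
Qed.

Lemma transfer N L g k : deriv N (fun gk => List.In gk (newL N L)) g k ->
  exists g', [/\ deriv N.+1 (fun gk => List.In gk L) g' k,
                 forall i, (i < N)%N -> g' i = g i & g' N = 0].
Proof.
elim=> {g k}.
- move=> gk /newL_In [[H E]|[p [q [Hp Hq pP qN ->]]]].
    by exists gk.1; split => //; apply: dmem.
  exists (comb N p q).1; split => //=; last by ring.
  apply: dadd; apply: dscale; try (by apply: dmem).
    by rewrite oppr_ge0 ltW.
  by rewrite ltW.
- by exists (fun _ => 0); split => //; apply: dzero.
- move=> g1 k1 g2 k2 _ [h1 [D1 E1 Z1]] _ [h2 [D2 E2 Z2]].
  exists (fun i => h1 i + h2 i); split; first by apply: dadd.
    by move=> i iN /=; rewrite E1 // E2.
  by rewrite Z1 Z2 addr0.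
- move=> a g k a0 _ [h [D E Z]]; exists (fun i => a * h i); split.
  + by apply: dscale.
  + by move=> i iN; rewrite E.
  + by rewrite Z mulr0.
- by move=> g k k' _ [h [D E Z]] kk; exists h; split => //; apply: dweak kk.
- move=> g g' k _ [h [D E Z]] e; exists h; split => // i iN.
  by rewrite E // e.
Qed.

Lemma foldmax_ge (a : R) s x : List.In x s -> x <= foldr Num.max a s.
Proof.
elim: s => //= y s IH [->|H]; first by rewrite le_max lexx.
by rewrite le_max (IH H) orbT.
Qed.
Lemma foldmax_ge0 (a : R) s : a <= foldr Num.max a s.
Proof. by elim: s => //= y s IH; rewrite le_max IH orbT. Qed.
Lemma foldmax_le (a u : R) s : a <= u -> (forall x, List.In x s -> x <= u) -> foldr Num.max a s <= u.
Proof.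
move=> au; elim: s => //= y s IH H; rewrite ge_max H /=; last by left.
by apply: IH => x Hx; apply: H; right.
Qed.
Lemma foldmin_le (a : R) s x : List.In x s -> foldr Num.min a s <= x.
Proof.
elim: s => //= y s IH [->|H]; first by rewrite ge_min lexx.
by rewrite ge_min (IH H) orbT.
Qed.
Lemma foldmin_le0 (a : R) s : foldr Num.min a s <= a.
Proof. by elim: s => //= y s IH; rewrite ge_min IH orbT. Qed.

Lemma feas_step N L z' : sat N (newL N L) z' -> exists z, sat N.+1 L z.
Proof.
move=> H.
pose bnd (gk : form) := (gk.2 - dot N gk.1 z') / gk.1 N.
pose u := foldr Num.min 0 (List.map bnd (Neg N L)).
pose x := foldr Num.max u (List.map bnd (Pos N L)).
have pq : forall p q, List.In p L -> List.In q L -> 0 < p.1 N -> q.1 N < 0 -> bnd p <= bnd q.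
  move=> p q Hp Hq pP qN.
  have : (comb N p q).2 <= dot N (comb N p q).1 z'.
    apply: H; rewrite /newL List.in_app_iff; right.
    apply/List.in_flat_map; exists p; split; first by apply/List.filter_In.
    by apply/List.in_map_iff; exists q; split => //; apply/List.filter_In.
  rewrite /comb /= dot_glin.
  have -> : dot N (fun i => - q.1 N * p.1 i) z' = - q.1 N * dot N p.1 z'.
    by rewrite /dot mulr_sumr; apply: eq_bigr => i _; rewrite mulrA.
  move=> Hc; rewrite /bnd.
  have pN : p.1 N != 0 by rewrite gt_eqF.
  have qN' : q.1 N != 0 by rewrite lt_eqF.
  rewrite ler_pdivrMr // mulrAC ler_ndivlMr //.
  nra.
have xu : forall q, List.In q L -> q.1 N < 0 -> x <= bnd q.
  move=> q Hq qN; apply: foldmax_le.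
    by apply: foldmin_le; apply/List.in_map_iff; exists q; split => //; apply/List.filter_In.
  move=> y /List.in_map_iff [p [<- /List.filter_In [Hp pP]]]; exact: pq.
have xl : forall p, List.In p L -> 0 < p.1 N -> bnd p <= x.
  move=> p Hp pP; apply: foldmax_ge; apply/List.in_map_iff; exists p; split => //.
  by apply/List.filter_In.
exists (fun i => if i == N then x else z' i) => gk Hg.
rewrite dotS eqxx.
have -> : dot N gk.1 (fun i => if i == N then x else z' i) = dot N gk.1 z'.
  by apply: eq_bigr => i _; rewrite ltn_eqF.
case: (ltgtP (gk.1 N) 0) => a.
- have := xu _ Hg a; rewrite /bnd ler_ndivlMr // => h; lra.
- have := xl _ Hg a; rewrite /bnd ler_pdivrMr // => h; lra.
- rewrite a mul0r addr0; apply: H; rewrite /newL List.in_app_iff; left.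
  by apply/List.filter_In; rewrite a eqxx.
Qed.

Theorem farkas0 N : forall L, ~ (exists z, sat N L z) ->
  deriv N (fun gk => List.In gk L) (fun _ => 0) 1.
Proof.
elim: N => [|N IH] L H.
  have [gk [Hg kp]] : exists gk, List.In gk L /\ 0 < gk.2.
    apply: Classical_Prop.NNPP => nE; apply: H; exists (fun _ => 0) => gk Hg.
    rewrite /dot big_ord0 leNgt; apply/negP => kp; apply: nE; by exists gk.
  apply: (@dext _ _ (fun i => gk.2^-1 * gk.1 i)) => //.
  have -> : 1 = gk.2^-1 * gk.2 by rewrite mulVf // gt_eqF.
  by apply: dscale; [rewrite invr_ge0 ltW|apply: dmem].
have [g' [D E Z]] := transfer (IH (newL N L) (fun '(ex_intro z Hz) => H (feas_step Hz))).
apply: (dext D) => i; rewrite ltnS leq_eqVlt => /orP [/eqP ->|iN]; first by rewrite Z.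
by rewrite E.
Qed.

Definition homL N (L : list form) (c : nat -> R) (v : R) : list form :=
  (fun i => if i == N then 1 else 0, 0) ::
  ((fun i => if i == N then v else - c i), 1) ::
  List.map (fun gk : form => (fun i => if i == N then - gk.2 else gk.1 i, 0)) L.

Lemma dot_ifN N (g : nat -> R) a z :
  dot N (fun i => if i == N then a else g i) z = dot N g z.
Proof. by apply: eq_bigr => i _; rewrite ltn_eqF. Qed.

Lemma homL_inv N L c v G K : deriv N.+1 (fun gk => List.In gk (homL N L c v)) G K ->
  exists nu h, [/\ 0 <= nu, K <= nu, deriv N (fun gk => List.In gk L) h (nu * v - G N)
                 & forall i, (i < N)%N -> G i = h i - nu * c i].
Proof.
elim=> {G K}.
- move=> gk [<-|[<-|/List.in_map_iff [gk' [<- Hg]]]] /=.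
  + exists 0, (fun _ => 0); split => //.
    * apply: (dweak (k := 0)); [exact: dzero|by rewrite eqxx mul0r sub0r lerN10].
    * by move=> i iN; rewrite ltn_eqF // mul0r subr0.
  + exists 1, (fun _ => 0); split => //.
    * by rewrite eqxx mul1r subrr; apply: dzero.
    * by move=> i iN; rewrite ltn_eqF // mul1r sub0r.
  + exists 0, gk'.1; split => //.
    * by rewrite eqxx mul0r sub0r opprK; apply: dmem.
    * by move=> i iN; rewrite ltn_eqF // mul0r subr0.
- exists 0, (fun _ => 0); split => //; first by rewrite mul0r subr0; apply: dzero.
  by move=> i _; rewrite mul0r subr0.
- move=> g1 k1 g2 k2 _ [n1 [h1 [n10 K1 D1 E1]]] _ [n2 [h2 [n20 K2 D2 E2]]].
  exists (n1 + n2), (fun i => h1 i + h2 i); split.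
  + by rewrite addr_ge0.
  + by rewrite lerD.
  + have -> : (n1 + n2) * v - (g1 N + g2 N) = (n1 * v - g1 N) + (n2 * v - g2 N) by ring.
    by apply: dadd.
  + by move=> i iN; rewrite E1 // E2 //; ring.
- move=> a g k a0 _ [n [h [n0 Kn D E]]].
  exists (a * n), (fun i => a * h i); split.
  + by rewrite mulr_ge0.
  + by rewrite ler_wpM2l.
  + have -> : a * n * v - a * g N = a * (n * v - g N) by ring.
    by apply: dscale.
  + by move=> i iN; rewrite E //; ring.
- move=> g k k' _ [n [h [n0 Kn D E]]] kk; exists n, h; split => //.
  exact: le_trans kk Kn.
- move=> g g' k _ [n [h [n0 Kn D E]]] e; exists n, h; split => //.
    by rewrite -e.
  by move=> i iN; rewrite -e ?E // ltnW.
Qed.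

Theorem farkas N L c v : (exists z0, sat N L z0) ->
  (forall z, sat N L z -> v <= dot N c z) -> deriv N (fun gk => List.In gk L) c v.
Proof.
move=> [z0 H0] Hb.
have inf : ~ (exists z, sat N.+1 (homL N L c v) z).
  move=> [z Hz].
  have t0 : 0 <= z N.
    have := Hz _ (or_introl erefl); rewrite /= dotS eqxx mul1r dot_ifN.
    by rewrite /dot big1 ?add0r // => i _; rewrite mul0r.
  have hc : 1 <= v * z N - dot N c z.
    have := Hz _ (or_intror (or_introl erefl)); rewrite /= dotS eqxx dot_ifN.
    have -> : dot N (fun i => - c i) z = - dot N c z.
      by rewrite /dot -sumrN; apply: eq_bigr => i _; rewrite mulNr.
    by rewrite addrC.
  have hg : forall gk, List.In gk L -> gk.2 * z N <= dot N gk.1 z.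
    move=> gk Hg; have := Hz _ (or_intror (or_intror (List.in_map _ _ _ Hg))).
    rewrite /= dotS eqxx dot_ifN => h; lra.
  case: (ltgtP (z N) 0) => tz; first by lra.
  - pose z' := fun i => (z N)^-1 * z i.
    have : sat N L z'.
      move=> gk Hg; rewrite /z' dot_scale.
      by rewrite ler_pdivlMl // mulrC; apply: hg.
    move/Hb; rewrite /z' dot_scale ler_pdivlMl // => h; lra.
  - pose s := `|dot N c z0 - v| + 1.
    have : sat N L (fun i => z0 i + s * z i).
      move=> gk Hg; rewrite dot_lin.
      have := hg _ Hg; rewrite tz mulr0 => h1.
      have := H0 _ Hg => h2.
      have s0 : 0 <= s by rewrite /s addr_ge0.
      have := mulr_ge0 s0 h1; lra.
    move/Hb; rewrite dot_lin => h.
    have : dot N c z0 - v <= `|dot N c z0 - v| by apply: ler_norm.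
    rewrite tz mulr0 in hc.
    have s1 : 1 <= s by rewrite /s lerDr.
    have : s * 1 <= s * (- dot N c z) by apply: ler_wpM2l; lra.
    rewrite mulr1 mulrN => hs.
    have es : s = `|dot N c z0 - v| + 1 by [].
    lra.
have [nu [h [n0 K1 D E]]] := homL_inv (farkas0 inf).
have nP : 0 < nu by lra.
apply: (dext (g := fun i => nu^-1 * h i)); last first.
  by move=> i iN; have := E i iN => /eqP; rewrite eq_sym subr_eq add0r => /eqP ->;
     rewrite mulrA mulVf ?gt_eqF // mul1r.
have -> : v = nu^-1 * (nu * v - 0) by rewrite subr0 mulrA mulVf ?gt_eqF // mul1r.
by apply: dscale; rewrite ?invr_ge0 ?ltW.
Qed.
End FM.


Section Glue.
Variable R : realFieldType.

Definition blk o len (f : nat -> R) : nat -> R :=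
  fun k => if (o <= k)%N && (k < o + len)%N then f (k - o)%N else 0.

Lemma dot_blk N o len f (z : nat -> R) : (o + len <= N)%N ->
  dot N (blk o len f) z = \sum_(j < len) f j * z (o + j)%N.
Proof.
move=> H; rewrite /dot -(big_mkord xpredT (fun k => blk o len f k * z k)).
rewrite (big_cat_nat (leq0n o) (leq_trans (leq_addr len o) H)) /=.
rewrite (big_cat_nat (leq_addr len o) H) /=.
have Z1 : \sum_(0 <= i < o) blk o len f i * z i = 0.
  rewrite big_nat_cond big1 // => i /andP [/andP [_ io] _].
  by rewrite /blk leqNgt io /= mul0r.
have Z2 : \sum_(o + len <= i < N) blk o len f i * z i = 0.
  rewrite big_nat_cond big1 // => i /andP [/andP [io _] _].
  by rewrite /blk ltnNge io andbF mul0r.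
rewrite Z1 Z2 add0r addr0.
rewrite -{1}[o]add0n big_addn addKn big_mkord; apply: eq_bigr => i _.
by rewrite /blk leq_addl /= [(i + o)%N]addnC ltn_add2l ltn_ord addKn.
Qed.

Definition vnf m (f : 'I_m -> R) (k : nat) : R := oapp f 0 (insub k).
Lemma vnf_ord m (f : 'I_m -> R) (s : 'I_m) : vnf f s = f s.
Proof. by rewrite /vnf valK. Qed.

Lemma dot_blkv N o len (f : 'I_len -> R) (z : nat -> R) : (o + len <= N)%N ->
  dot N (blk o len (vnf f)) z = \sum_(j < len) f j * z (o + j)%N.
Proof. by move=> H; rewrite dot_blk //; apply: eq_bigr => j _; rewrite vnf_ord. Qed.

Lemma dot_add N (g1 g2 z : nat -> R) : dot N (fun k => g1 k + g2 k) z = dot N g1 z + dot N g2 z.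
Proof. by rewrite /dot -big_split; apply: eq_bigr => i _; rewrite mulrDl. Qed.

Lemma dot_sum N (I : finType) (g : I -> nat -> R) (z : nat -> R) :
  dot N (fun k => \sum_(i : I) g i k) z = \sum_(i : I) dot N (g i) z.
Proof.
rewrite /dot exchange_big; apply: eq_bigr => k _; rewrite mulr_suml //.
Qed.

Lemma dot_neg N (g z : nat -> R) : dot N (fun k => - g k) z = - dot N g z.
Proof. by rewrite /dot -sumrN; apply: eq_bigr => i _; rewrite mulNr. Qed.

End Glue.


Lemma In_mem (T : eqType) (x : T) (s : seq T) : x \in s -> List.In x s.
Proof. elim: s => //= y s IH; rewrite in_cons => /orP [/eqP ->|/IH]; by [left|right]. Qed.
Lemma In_enum (T : finType) (x : T) : List.In x (enum T).
Proof. by apply: In_mem; rewrite mem_enum. Qed.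

Section Enc.
Variable R : realType.
Variables (n t : nat) (m p : 'I_t -> nat).
Definition MM := (\max_(i < t) m i).+1.
Definition off (i : 'I_t) := (n + i * MM)%N.
Definition NN := (n + t * MM)%N.

Lemma m_lt i : (m i < MM)%N.
Proof. by rewrite ltnS (leq_bigmax i). Qed.

Lemma off_le i : (off i + m i <= NN)%N.
Proof.
rewrite /off /NN -addnA leq_add2l.
apply: leq_trans (_ : (i * MM + MM <= t * MM)%N).
  by rewrite leq_add2l ltnW // m_lt.
by rewrite -mulSnr leq_mul2r ltn_ord orbT.
Qed.

Lemma n_le : (0 + n <= NN)%N.
Proof. by rewrite add0n leq_addr. Qed.

Definition xz (z : nat -> R) : 'cV[R]_n := \col_k z k.
Definition yz (z : nat -> R) (i : 'I_t) : 'cV[R]_(m i) := \col_k z (off i + k)%N.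

Definition embed (x : 'cV[R]_n) (y : forall i, 'cV[R]_(m i)) : nat -> R :=
  fun k => if (k < n)%N then vnf (fun s => x s 0) k
           else oapp (fun i : 'I_t => vnf (fun s => y i s 0) ((k - n)%N %% MM)%N) 0
                     (insub ((k - n)%N %/ MM)%N).

Lemma xz_embed x y : xz (embed x y) = x.
Proof. by apply/matrixP => s j; rewrite !mxE ord1 /embed (ltn_ord s) vnf_ord. Qed.

Lemma yz_embed x y i : yz (embed x y) i = y i.
Proof.
apply/matrixP => s j; rewrite !mxE ord1 /embed /off.
rewrite -addnA ltnNge leq_addr /= addKn.
have sM : (s < MM)%N by apply: leq_trans (ltn_ord s) (ltnW (m_lt i)).
rewrite divnMDl // divn_small // addn0 valK /= modnMDl modn_small //.
by rewrite vnf_ord.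
Qed.

Lemma dot_x (f : 'I_n -> R) z : dot NN (blk 0 n (vnf f)) z = \sum_(s < n) f s * xz z s 0.
Proof. by rewrite dot_blkv ?n_le //; apply: eq_bigr => s _; rewrite mxE. Qed.

Lemma dot_y i (f : 'I_(m i) -> R) z :
  dot NN (blk (off i) (m i) (vnf f)) z = \sum_(s < m i) f s * yz z i s 0.
Proof. by rewrite dot_blkv ?off_le //; apply: eq_bigr => s _; rewrite mxE. Qed.

Variables (rx : nat) (Ax : 'M[R]_(rx, n)) (bx : 'cV[R]_rx).
Variables (rY : 'I_t -> nat) (AY : forall i, 'M[R]_(rY i, m i)) (bY : forall i, 'cV[R]_(rY i)).
Variables (T : forall i, 'M[R]_(p i, n)) (Q : forall i, 'M[R]_(p i, m i))
  (h : forall i, 'cV[R]_(p i)).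

Definition fX (j : 'I_rx) : form R := (blk 0 n (vnf (fun s => - Ax j s)), - bx j 0).
Definition fY i (j : 'I_(rY i)) : form R :=
  (blk (off i) (m i) (vnf (fun s => - AY i j s)), - bY i j 0).
Definition fE i (r : 'I_(p i)) : form R :=
  (fun k => blk 0 n (vnf (fun s => T i r s)) k + blk (off i) (m i) (vnf (fun s => Q i r s)) k,
   h i r 0).
Definition fEn i (r : 'I_(p i)) : form R := (fun k => - (fE r).1 k, - (fE r).2).

Definition LL : list (form R) :=
  List.map fX (enum 'I_rx) ++
  List.flat_map (fun i => List.map (@fY i) (enum 'I_(rY i))) (enum 'I_t) ++
  List.flat_map (fun i => List.map (@fE i) (enum 'I_(p i)) ++ List.map (@fEn i) (enum 'I_(p i)))
    (enum 'I_t).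

Definition inS (z : nat -> R) :=
  (forall j, (Ax *m xz z) j 0 <= bx j 0) /\ forall i j, (AY i *m yz z i) j 0 <= bY i j 0.

Definition eqv (z : nat -> R) i := T i *m xz z + Q i *m yz z i.

Lemma dot_fX j z : dot NN (fX j).1 z = - (Ax *m xz z) j 0.
Proof. by rewrite dot_x mxE -sumrN; apply: eq_bigr => s _; rewrite mulNr. Qed.
Lemma dot_fY i j z : dot NN (fY j).1 z = - (AY i *m yz z i) j 0.
Proof. by rewrite dot_y mxE -sumrN; apply: eq_bigr => s _; rewrite mulNr. Qed.
Lemma dot_fE i r z : dot NN (fE r).1 z = eqv z i r 0.
Proof. by rewrite dot_add dot_x dot_y !mxE. Qed.
Lemma dot_fEn i r z : dot NN (fEn r).1 z = - eqv z i r 0.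
Proof. by rewrite dot_neg dot_fE. Qed.

Lemma LL_In gk : List.In gk LL ->
  (exists j, gk = fX j) \/ (exists i j, gk = @fY i j) \/ (exists i r, gk = @fE i r)
  \/ (exists i r, gk = @fEn i r).
Proof.
rewrite /LL !List.in_app_iff => -[|[]].
- by move/List.in_map_iff => [j [<- _]]; left; exists j.
- by move/List.in_flat_map => [i [_ /List.in_map_iff [j [<- _]]]]; right; left; exists i, j.
- move/List.in_flat_map => [i [_ /List.in_app_iff [] /List.in_map_iff [r [<- _]]]].
    by right; right; left; exists i, r.
  by right; right; right; exists i, r.
Qed.

Lemma sat_LL z : sat NN LL z <-> inS z /\ forall i, eqv z i = h i.
Proof.
split.
- move=> H; split; first split.
  + move=> j; have := H (fX j); rewrite dot_fX /= lerN2; apply.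
    by rewrite /LL List.in_app_iff; left; apply: List.in_map; apply: In_enum.
  + move=> i j; have := H (fY j); rewrite dot_fY /= lerN2; apply.
    rewrite /LL !List.in_app_iff; right; left; apply/List.in_flat_map; exists i; split.
      exact: In_enum.
    by apply: List.in_map; apply: In_enum.
  + move=> i; apply/matrixP => r j; rewrite ord1; apply/eqP; rewrite eq_le; apply/andP; split.
    * have := H (fEn r); rewrite dot_fEn /= lerN2; apply.
      rewrite /LL !List.in_app_iff; right; right; apply/List.in_flat_map; exists i; split.
        exact: In_enum.
      by rewrite List.in_app_iff; right; apply: List.in_map; apply: In_enum.
    * have := H (fE r); rewrite dot_fE /=; apply.
      rewrite /LL !List.in_app_iff; right; right; apply/List.in_flat_map; exists i; split.
        exact: In_enum.
      by rewrite List.in_app_iff; left; apply: List.in_map; apply: In_enum.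
- move=> [[HX HY] HE] gk /LL_In [[j ->]|[[i [j ->]]|[[i [r ->]]|[i [r ->]]]]].
  + by rewrite dot_fX /= lerN2.
  + by rewrite dot_fY /= lerN2.
  + by rewrite dot_fE /= HE.
  + by rewrite dot_fEn /= HE.
Qed.

Lemma vdot0l k (x : 'cV[R]_k) : vdot 0 x = 0.
Proof. by rewrite /vdot big1 // => i _; rewrite mxE mul0r. Qed.
Lemma vdotDl k (a b x : 'cV[R]_k) : vdot (a + b) x = vdot a x + vdot b x.
Proof. by rewrite /vdot -big_split; apply: eq_bigr => i _; rewrite mxE mulrDl. Qed.
Lemma vdotZl k (c : R) (a x : 'cV[R]_k) : vdot (c *: a) x = c * vdot a x.
Proof. by rewrite /vdot mulr_sumr; apply: eq_bigr => i _; rewrite mxE mulrA. Qed.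
Lemma vdotNl k (a x : 'cV[R]_k) : vdot (- a) x = - vdot a x.
Proof. by rewrite -scaleN1r vdotZl mulN1r. Qed.
Lemma vdot_delta k (r : 'I_k) (x : 'cV[R]_k) : vdot (delta_mx r 0) x = x r 0.
Proof.
rewrite /vdot (bigD1 r) //= big1 ?addr0; first by rewrite mxE !eqxx mul1r.
by move=> j jr; rewrite mxE (negbTE jr) mul0r.
Qed.

Lemma sum_dfwith i (a : 'cV[R]_(p i)) (w : forall i, 'cV[R]_(p i)) :
  \sum_(j < t) vdot (eqtype.dfwith (fun j => 0 : 'cV[R]_(p j)) a j) (w j) = vdot a (w i).
Proof.
rewrite (bigD1 i) //= eqtype.dfwith_in big1 ?addr0 //.
by move=> j ji; rewrite eqtype.dfwith_out 1?eq_sym // vdot0l.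
Qed.

Lemma sumvdotD (a1 a2 w : forall i, 'cV[R]_(p i)) :
  \sum_(i < t) vdot (a1 i + a2 i) (w i) = \sum_(i < t) vdot (a1 i) (w i) + \sum_(i < t) vdot (a2 i) (w i).
Proof. by rewrite -big_split; apply: eq_bigr => i _; rewrite vdotDl. Qed.
Lemma sumvdotZ (c : R) (a w : forall i, 'cV[R]_(p i)) :
  \sum_(i < t) vdot (c *: a i) (w i) = c * \sum_(i < t) vdot (a i) (w i).
Proof. by rewrite mulr_sumr; apply: eq_bigr => i _; rewrite vdotZl. Qed.

Lemma extract g k : deriv NN (fun gk => List.In gk LL) g k ->
  exists al : forall i, 'cV[R]_(p i), forall z, inS z ->
    k - \sum_(i < t) vdot (al i) (h i) <= dot NN g z - \sum_(i < t) vdot (al i) (eqv z i).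
Proof.
have zero_al : forall w : forall i, 'cV[R]_(p i), \sum_(i < t) vdot (0 : 'cV[R]_(p i)) (w i) = 0.
  by move=> w; rewrite big1 // => i _; rewrite vdot0l.
elim=> {g k}.
- move=> gk /LL_In [[j ->]|[[i [j ->]]|[[i [r ->]]|[i [r ->]]]]].
  + exists (fun i => 0) => z [HX HY]; rewrite !zero_al !subr0 dot_fX /= lerN2; exact: HX.
  + exists (fun i => 0) => z [HX HY]; rewrite !zero_al !subr0 dot_fY /= lerN2; exact: HY.
  + exists (eqtype.dfwith (fun j => 0 : 'cV[R]_(p j)) (delta_mx r 0)) => z _.
    by rewrite !sum_dfwith !vdot_delta dot_fE /= !subrr.
  + exists (eqtype.dfwith (fun j => 0 : 'cV[R]_(p j)) (- delta_mx r 0)) => z _.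
    by rewrite !sum_dfwith !vdotNl !vdot_delta dot_fEn /= !subrr.
- exists (fun i => 0) => z _; by rewrite !zero_al !subr0 /dot big1 // => i _; rewrite mul0r.
- move=> g1 k1 g2 k2 _ [a1 H1] _ [a2 H2]; exists (fun i => a1 i + a2 i) => z Hz.
  have := H1 z Hz; have := H2 z Hz; rewrite dot_add.
  rewrite !(sumvdotD a1 a2); lra.
- move=> a g k a0 _ [al H]; exists (fun i => a *: al i) => z Hz.
  have := H z Hz.
  rewrite !(sumvdotZ a al) => h1.
  have -> : dot NN (fun i => a * g i) z = a * dot NN g z by rewrite /dot mulr_sumr; apply: eq_bigr => i _; rewrite mulrA.
  have := ler_wpM2l a0 h1; lra.
- move=> g k k' _ [al H] kk; exists al => z Hz; have := H z Hz; lra.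
- move=> g g' k _ [al H] e; exists al => z Hz; rewrite -(dot_ext z e); exact: H.
Qed.
End Enc.

Local Open Scope classical_set_scope.


Section Ereal.
Variable R : realType.
Local Open Scope ereal_scope.

Lemma sig_lb k (S : set 'cV[R]_k) a x : S x -> sigma S a <= (vdot a x)%:E.
Proof. by move=> Sx; apply: ereal_inf_lbound; exists x. Qed.

Lemma sig_ge k (S : set 'cV[R]_k) a (K : \bar R) :
  (forall x, S x -> K <= (vdot a x)%:E) -> K <= sigma S a.
Proof. by move=> H; apply/ereal_infP => _ [x Sx <-]; apply: H. Qed.

Lemma sig_ltoo k (S : set 'cV[R]_k) a : S !=set0 -> sigma S a < +oo.
Proof. by move=> [x Sx]; apply: le_lt_trans (sig_lb a Sx) (ltry _). Qed.

Lemma inf_step k (S : set 'cV[R]_k) a (C : \bar R) (K : R) : S !=set0 -> C < +oo ->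
  (forall y, S y -> K%:E <= C + (vdot a y)%:E) -> K%:E <= C + sigma S a.
Proof.
move=> [y0 Sy0] Coo H; case: C Coo H => [c| |] // _ H.
  have : (K - c)%R%:E <= sigma S a.
    apply: sig_ge => y Sy; have := H y Sy; rewrite -EFinD !lee_fin => h; lra.
  case: (sigma S a) => [s| |] //.
    by rewrite -EFinD !lee_fin => h; lra.
  by move=> _; rewrite /= leey.
by have := H y0 Sy0.
Qed.

Lemma peel t (mm : 'I_t -> nat) (Y : forall i : 'I_t, set 'cV[R]_(mm i))
  (c : forall i, 'cV[R]_(mm i)) (sX : \bar R) (K : R) :
  (forall i, Y i !=set0) -> sX < +oo ->
  (forall y : forall i, 'cV[R]_(mm i), (forall i, Y i (y i)) ->
      K%:E <= sX + \sum_(i < t) (vdot (c i) (y i))%:E) ->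
  K%:E <= sX + \sum_(i < t) sigma (Y i) (c i).
Proof.
move=> Y0 sXoo H.
pose term k (y : forall i, 'cV[R]_(mm i)) (i : 'I_t) :=
  if (i < k)%N then sigma (Y i) (c i) else (vdot (c i) (y i))%:E.
suff : forall k, (k <= t)%N -> forall y : forall i, 'cV[R]_(mm i),
    (forall i, Y i (y i)) -> K%:E <= sX + \sum_(i < t) term k y i.
  pose y0 := fun i => projT1 (cid (Y0 i)).
  have Hy0 : forall i, Y i (y0 i) by move=> i; exact: (projT2 (cid (Y0 i))).
  move=> /(_ t (leqnn t) y0 Hy0).
  by rewrite (eq_bigr (fun i => sigma (Y i) (c i))) // => i _; rewrite /term ltn_ord.
elim=> [_|k IH kt] y Hy.
  by rewrite (eq_bigr (fun i => (vdot (c i) (y i))%:E)) ?H // => i _; rewrite /term ltn0.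
pose j : 'I_t := Ordinal kt.
rewrite (bigD1 j) //= {1}/term ltnSn addeCA addeC.
apply: inf_step; first exact: Y0.
  apply: lte_add_pinfty => //; apply: lte_sum_pinfty => i _.
  by rewrite /term; case: ifP => _; [exact: sig_ltoo|exact: ltry].
move=> yj Yj.
have Hy' : forall i, Y i (eqtype.dfwith y yj i).
  by move=> i; case: eqtype.dfwithP.
have := IH (ltnW kt) _ Hy'.
rewrite (bigD1 j) //= {1}/term ltnn eqtype.dfwith_in addeCA addeC.
congr (_ <= _ + _); congr (_ + _); apply: eq_bigr => i ij.
rewrite /term eqtype.dfwith_out 1?eq_sym //.
have ik : (val i != k)%N by apply: contra ij => /eqP e; apply/eqP/val_inj.
by rewrite ltnS (leq_eqVlt i) (negbTE ik).
Qed.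
End Ereal.

Section Vdot.
Variable R : realType.
Lemma vdot_tr k l (a : 'cV[R]_k) (M : 'M[R]_(k, l)) (b : 'cV[R]_l) :
  vdot a (M *m b) = vdot (M^T *m a) b.
Proof.
rewrite /vdot; under eq_bigr do rewrite mxE mulr_sumr.
rewrite exchange_big; apply: eq_bigr => j _; rewrite mxE mulr_suml.
by apply: eq_bigr => i _; rewrite !mxE; ring.
Qed.
Lemma vdotDr k (a u w : 'cV[R]_k) : vdot a (u + w) = vdot a u + vdot a w.
Proof. by rewrite /vdot -big_split; apply: eq_bigr => i _; rewrite mxE mulrDr. Qed.
Lemma vdotBr k (a u w : 'cV[R]_k) : vdot a (u - w) = vdot a u - vdot a w.
Proof. by rewrite /vdot -sumrB; apply: eq_bigr => i _; rewrite !mxE mulrBr. Qed.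
Lemma vdotDl' k (a b x : 'cV[R]_k) : vdot (a + b) x = vdot a x + vdot b x.
Proof. by rewrite /vdot -big_split; apply: eq_bigr => i _; rewrite mxE mulrDl. Qed.
Lemma vdotZl' k (c : R) (a x : 'cV[R]_k) : vdot (c *: a) x = c * vdot a x.
Proof. by rewrite /vdot mulr_sumr; apply: eq_bigr => i _; rewrite mxE mulrA. Qed.
Lemma vdotNl' k (a x : 'cV[R]_k) : vdot (- a) x = - vdot a x.
Proof. by rewrite -scaleN1r vdotZl' mulN1r. Qed.
Lemma vdot_suml k t (a : 'I_t -> 'cV[R]_k) x :
  vdot (\sum_(i < t) a i) x = \sum_(i < t) vdot (a i) x.
Proof.
rewrite /vdot exchange_big; apply: eq_bigr => j _.
by rewrite summxE mulr_suml.
Qed.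

Lemma sigY_le_epi p m (Q : 'M[R]_(p, m)) (d : 'cV[R]_m) (Y : set 'cV[R]_m)
  (a : 'cV[R]_p) (r : R) : 0 <= r ->
  (sigma Y (Q^T *m a + r *: d) <= sigma_epi (valf Q d Y) a r)%E.
Proof.
move=> r0; apply/ereal_infP => _ [[w th] Hepi <-] /=.
apply/lee_addgt0Pr => e e0.
pose de := e / (r + 1).
have de0 : 0 < de by rewrite /de divr_gt0 // ltr_wpDl.
have rde : r * de <= e.
  rewrite /de mulrA ler_pdivrMr ?ltr_wpDl //; nra.
have : (valf Q d Y w < (th + de)%:E)%E.
  apply: le_lt_trans Hepi _; by rewrite lte_fin ltrDl.
move=> /ereal_inf_lt [_ [y [Qy Yy] <-]]; rewrite lte_fin => hy.
apply: le_trans (sig_lb _ Yy) _.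
rewrite -EFinD lee_fin vdotDl' vdotZl' -vdot_tr Qy.
have := ler_wpM2l r0 (ltW hy); lra.
Qed.
End Vdot.


Lemma poly_choice (R : realType) t (m : 'I_t -> nat) (Y : forall i, set 'cV[R]_(m i)) :
  (forall i, polyhedron (Y i)) ->
  exists (rY : 'I_t -> nat) (AY : forall i, 'M[R]_(rY i, m i)) (bY : forall i, 'cV[R]_(rY i)),
    forall i, Y i = [set y | forall j, (AY i *m y) j 0 <= bY i j 0].
Proof.
move=> H.
exists (fun i => proj1_sig (cid (H i))).
exists (fun i => proj1_sig (cid (proj2_sig (cid (H i))))).
exists (fun i => proj1_sig (cid (proj2_sig (cid (proj2_sig (cid (H i))))))).
by move=> i; exact: (proj2_sig (cid (proj2_sig (cid (proj2_sig (cid (H i))))))).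
Qed.

Definition cobj (R : realType) n t (m : 'I_t -> nat) (rho : 'cV[R]_n) (rho0 : 'I_t -> R)
  (d : forall i, 'cV[R]_(m i)) : nat -> R :=
  fun k => blk 0 n (vnf (fun s => rho s 0)) k +
    \sum_(i < t) blk (off n m i) (m i) (vnf (fun s => rho0 i * d i s 0)) k.

Lemma dot_cobj (R : realType) n t (m : 'I_t -> nat) rho rho0 d (z : nat -> R) :
  dot (NN n m) (cobj rho rho0 d) z =
  vdot rho (xz n z) + \sum_(i < t) rho0 i * vdot (d i) (yz n m z i).
Proof.
rewrite /cobj dot_add dot_sum dot_x; congr (_ + _).
apply: eq_bigr => i _; rewrite dot_y /vdot mulr_sumr; apply: eq_bigr => s _; ring.
Qed.

Theorem mainTheorem4 (R : realType) (n t : nat) (p m : 'I_t -> nat)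
  (X : set 'cV[R]_n) (Y : forall i : 'I_t, set 'cV[R]_(m i))
  (T : forall i, 'M[R]_(p i, n)) (Q : forall i, 'M[R]_(p i, m i))
  (h : forall i, 'cV[R]_(p i)) (d : forall i, 'cV[R]_(m i))
  (c : 'cV[R]_n)
  (hX : polyhedron X) (hX0 : X !=set0)
  (hY : forall i, polyhedron (Y i)) (hY0 : forall i, Y i !=set0)
  (rho : 'cV[R]_n) (rho0 : 'I_t -> R) (hrho0 : forall i, 0 <= rho0 i)
  (hfin : sigma_F (Fprime X T Q h d Y) rho rho0 \is a fin_num)
  (ahat : forall i, 'cV[R]_(p i))
  (hopt : forall a : forall i, 'cV[R]_(p i),
     (dual_obj X T Q h d Y rho rho0 a <= dual_obj X T Q h d Y rho rho0 ahat)%E) :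
  forall (x : 'cV[R]_n) (theta : 'I_t -> R),
    X x ->
    (forall i : 'I_t,
       sigma_epi (valf (Q i) (d i) (Y i)) (ahat i) (rho0 i)
       <= (vdot (ahat i) (h i - T i *m x) + rho0 i * theta i)%:E)%E ->
    (sigma_F (Fprime X T Q h d Y) rho rho0
     <= (vdot rho x + \sum_(i < t) rho0 i * theta i)%:E)%E.
Proof.
move=> x theta Xx cuts.
case: hX => rx [Ax [bx HXe]].
have [rY [AY [bY HYe]]] := poly_choice hY.
set F := Fprime X T Q h d Y in hfin *.
set v := fine (sigma_F F rho rho0).
have hv : sigma_F F rho rho0 = v%:E by rewrite /v fineK.
have [xt0 [Xx0 Ex0]] : exists xt, F xt.
  apply: Classical_Prop.NNPP => nF; move: hfin; rewrite /sigma_F.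
  rewrite (_ : F = set0) ?image_set0 ?ereal_inf0 //.
  by apply/seteqP; split => xt //= Fxt; apply: nF; exists xt.
have ey : forall i, exists y, Q i *m y = h i - T i *m xt0.1 /\ Y i y.
  move=> i; apply: Classical_Prop.NNPP => ne; have := Ex0 i; rewrite /epi /valf /=.
  rewrite (_ : [set y | _ /\ _] = set0) ?image_set0 ?ereal_inf0 //.
  by apply/seteqP; split => y //= [Hy1 Hy2]; apply: ne; exists y.
pose y0 := fun i => proj1_sig (cid (ey i)).
have Hy0 : forall i, Q i *m y0 i = h i - T i *m xt0.1 /\ Y i (y0 i).
  by move=> i; exact: (proj2_sig (cid (ey i))).
have memX : forall z, X z <-> (forall j, (Ax *m z) j 0 <= bx j 0).
  by move=> z; rewrite HXe.
have memY : forall i z, Y i z <-> (forall j, (AY i *m z) j 0 <= bY i j 0).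
  by move=> i z; rewrite HYe.
have inS_embed : forall x' y', X x' -> (forall i, Y i (y' i)) ->
    inS Ax bx AY bY (embed x' y').
  move=> x' y' Hx Hy; split.
    by rewrite xz_embed; apply/memX.
  by move=> i; rewrite yz_embed; apply/memY.
have eqv_embed : forall x' y' i, eqv T Q (embed x' y') i = T i *m x' + Q i *m y' i.
  by move=> x' y' i; rewrite /eqv xz_embed yz_embed.
have D := farkas (N := NN n m) (L := LL Ax bx AY bY T Q h) (c := cobj rho rho0 d) (v := v).
have {D} D : deriv (NN n m) (fun gk => List.In gk (LL Ax bx AY bY T Q h)) (cobj rho rho0 d) v.
  apply: D.
    exists (embed xt0.1 y0); apply/sat_LL; split.
      by apply: inS_embed => // i; case: (Hy0 i).
    by move=> i; rewrite eqv_embed (proj1 (Hy0 i)) addrC subrK.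
  move=> z /sat_LL [[HX HY] HE].
  have : (sigma_F F rho rho0 <= (vdot rho (xz n z) + \sum_(i < t) rho0 i * vdot (d i) (yz n m z i))%:E)%E.
    apply: ereal_inf_lbound; exists (xz n z, fun i => vdot (d i) (yz n m z i)) => //.
    split; first by apply/memX.
    move=> i; rewrite /epi /=; apply: ereal_inf_lbound; exists (yz n m z i) => //.
    split; last by apply/memY.
    by rewrite -(HE i) /eqv addrAC subrr add0r.
  by rewrite hv lee_fin dot_cobj.
have [al Hal] := extract D.
have key : forall x' (y' : forall i, 'cV[R]_(m i)), X x' -> (forall i, Y i (y' i)) ->
  v - \sum_(i < t) vdot (al i) (h i) <= vdot rho x' + \sum_(i < t) rho0 i * vdot (d i) (y' i)
     - \sum_(i < t) vdot (al i) (T i *m x' + Q i *m y' i).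
  move=> x' y' Hx Hy; have := Hal _ (inS_embed _ _ Hx Hy).
  rewrite dot_cobj xz_embed.
  have -> : \sum_(i < t) rho0 i * vdot (d i) (yz n m (embed x' y') i) =
            \sum_(i < t) rho0 i * vdot (d i) (y' i).
    by apply: eq_bigr => i _; rewrite yz_embed.
  have -> : \sum_(i < t) vdot (al i) (eqv T Q (embed x' y') i) =
            \sum_(i < t) vdot (al i) (T i *m x' + Q i *m y' i).
    by apply: eq_bigr => i _; rewrite eqv_embed.
  by [].
have Hdual : (v%:E <= dual_obj X T Q h d Y rho rho0 (fun i => (- al i)%R))%E.
  rewrite /dual_obj /=.
  have Hp : ((v - \sum_(i < t) vdot (al i) (h i))%:E <=
     sigma X (rho + \sum_(i < t) (T i)^T *m (- al i)%R) +
     \sum_(i < t) sigma (Y i) ((Q i)^T *m (- al i)%R + rho0 i *: d i))%E.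
    apply: peel => //; first exact: sig_ltoo.
    move=> y Hy; rewrite sumEFin.
    have : ((v - \sum_(i < t) vdot (al i) (h i)
             - \sum_(i < t) vdot ((Q i)^T *m (- al i)%R + rho0 i *: d i) (y i))%:E
            <= sigma X (rho + \sum_(i < t) (T i)^T *m (- al i)%R))%E.
      apply: sig_ge => x' Hx; rewrite lee_fin.
      have := key x' y Hx Hy.
      have -> : \sum_(i < t) vdot ((Q i)^T *m (- al i)%R + rho0 i *: d i) (y i) =
          - \sum_(i < t) vdot (al i) (Q i *m y i) + \sum_(i < t) rho0 i * vdot (d i) (y i).
        rewrite -sumrN -big_split; apply: eq_bigr => i _.
        by rewrite vdotDl' vdotZl' -vdot_tr vdotNl'.
      have -> : vdot (rho + \sum_(i < t) (T i)^T *m (- al i)%R) x' =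
          vdot rho x' - \sum_(i < t) vdot (al i) (T i *m x').
        rewrite vdotDl' vdot_suml -sumrN; congr (_ + _); apply: eq_bigr => i _.
        by rewrite -vdot_tr vdotNl'.
      have -> : \sum_(i < t) vdot (al i) (T i *m x' + Q i *m y i) =
          \sum_(i < t) vdot (al i) (T i *m x') + \sum_(i < t) vdot (al i) (Q i *m y i).
        by rewrite -big_split; apply: eq_bigr => i _; rewrite vdotDr.
      lra.
    move/(leeD2r (\sum_(i < t) vdot ((Q i)^T *m (- al i)%R + rho0 i *: d i) (y i))%:E).
    by rewrite -EFinD subrK.
  rewrite -addeA; apply: le_trans (leeD2l _ Hp); rewrite -EFinD lee_fin.
  have -> : \sum_(i < t) vdot (- al i)%R (h i) = - \sum_(i < t) vdot (al i) (h i).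
    by rewrite -sumrN; apply: eq_bigr => i _; rewrite vdotNl'.
  lra.
have Hhat : (dual_obj X T Q h d Y rho rho0 ahat <= (vdot rho x + \sum_(i < t) rho0 i * theta i)%:E)%E.
  rewrite /dual_obj.
  have A1 := sig_lb (rho + \sum_(i < t) (T i)^T *m ahat i) Xx.
  have A2 : forall i, (sigma (Y i) ((Q i)^T *m ahat i + rho0 i *: d i) <=
      (vdot (ahat i) (h i - T i *m x) + rho0 i * theta i)%:E)%E.
    by move=> i; apply: le_trans (sigY_le_epi _ _ _ _ (hrho0 i)) (cuts i).
  apply: le_trans; first (apply: leeD; [apply: leeD2l; exact: A1|apply: lee_sum => i _; exact: A2 i]).
  rewrite sumEFin -!EFinD lee_fin.
  have -> : vdot (rho + \sum_(i < t) (T i)^T *m ahat i) x =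
      vdot rho x + \sum_(i < t) vdot (ahat i) (T i *m x).
    rewrite vdotDl' vdot_suml; congr (_ + _); apply: eq_bigr => i _.
    by rewrite -vdot_tr.
  have -> : \sum_(i < t) (vdot (ahat i) (h i - T i *m x) + rho0 i * theta i) =
      \sum_(i < t) vdot (ahat i) (h i) - \sum_(i < t) vdot (ahat i) (T i *m x)
      + \sum_(i < t) rho0 i * theta i.
    rewrite -sumrB -big_split; apply: eq_bigr => i _; by rewrite vdotBr.
  lra.
rewrite hv; apply: le_trans Hhat; apply: le_trans Hdual _; exact: hopt.
Qed.
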